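(* Let $G$ be any game state and let $P$ be a game path starting at $G$ which does not follow the Split-First Strategy. Then either there exists a game path starting at $G$ that is strictly longer than $P$, or there exists a game path starting at $G$ that follows the Split-First Strategy and has the same length as $P$.
   Context: Fibonacci numbers are indexed by $F_1=1$, $F_2=2$, $F_{i+1}=F_i+F_{i-1}$. A game state is a finite multiset of Fibonacci numbers (tracked by index). The legal moves are: $C_1$: replace $F_1,F_1$ by $F_2$; for $i\ge 2$, $C_i$: replace $F_{i-1},F_i$ by $F_{i+1}$ (a ''combining move''); $S_2$: replace $F_2,F_2$ by $F_1,F_3$; for $i\ge 3$, $S_i$: replace $F_i,F_i$ by $F_{i-2},F_{i+1}$ (a ''splitting move''). Here $C_1$ is grouped with the splitting moves, and ''combining move'' means $C_i$ with $i\ge 2$. Every sequence of legal moves is finite. A game path from a state $G$ is a sequence of legal moves starting at $G$ and continuing until no legal move is available; its length is its number of moves. A game path follows the Split-First Strategy if at each state along it: whenever some splitting move or $C_1$ is available, the move taken is one of those (any choice); otherwise the move taken is the combining move $C_i$ ($i\ge 2$) with the smallest index $i$ among those available. *)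

(* Defs.v *)
From Stdlib Require Import Arith List Lia.
Import ListNotations.

(* A game state: a finite multiset of Fibonacci numbers, tracked by index.
   [G i] is the multiplicity of F_i (indices start at 1; index 0 unused). *)
Definition state := nat -> nat.

Definition is_state (G : state) : Prop :=
  G 0 = 0 /\ exists N, forall i, N <= i -> G i = 0.

Inductive move := Comb (i : nat) | Split (i : nat).

Definition addc (a : nat) (k : nat) (G : state) : state :=
  fun j => if Nat.eqb j a then G j + k else G j.
Definition subc (a : nat) (k : nat) (G : state) : state :=
  fun j => if Nat.eqb j a then G j - k else G j.

Definition legal (m : move) (G : state) : Prop :=
  match m with
  | Comb i => (i = 1 /\ 2 <= G 1) \/ (2 <= i /\ 1 <= G (i - 1) /\ 1 <= G i)
  | Split i => 2 <= i /\ 2 <= G i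
  end.

(* the state after applying move m (meaningful when m is legal) *)
Definition next (m : move) (G : state) : state :=
  match m with
  | Comb i =>
      if Nat.eqb i 1 then addc 2 1 (subc 1 2 G)
      else addc (i + 1) 1 (subc i 1 (subc (i - 1) 1 G))
  | Split i =>
      if Nat.eqb i 2 then addc 3 1 (addc 1 1 (subc 2 2 G))
      else addc (i + 1) 1 (addc (i - 2) 1 (subc i 2 G))
  end.

Fixpoint final (G : state) (ms : list move) : state :=
  match ms with
  | [] => G
  | m :: ms' => final (next m G) ms'
  end.

Fixpoint legal_seq (G : state) (ms : list move) : Prop :=
  match ms with
  | [] => True
  | m :: ms' => legal m G /\ legal_seq (next m G) ms'
  end.

Definition game_path (G : state) (ms : list move) : Prop :=
  legal_seq G ms /\ forall m, ~ legal m (final G ms).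

Definition split_class (m : move) : Prop :=
  match m with
  | Comb i => i = 1
  | Split _ => True
  end.

Definition sf_choice (G : state) (m : move) : Prop :=
  ((exists m', split_class m' /\ legal m' G) -> split_class m) /\
  (~ (exists m', split_class m' /\ legal m' G) ->
     exists i, m = Comb i /\ 2 <= i /\
       forall j, 2 <= j -> legal (Comb j) G -> i <= j).

Fixpoint follows_sf (G : state) (ms : list move) : Prop :=
  match ms with
  | [] => True
  | m :: ms' => sf_choice G m /\ follows_sf (next m G) ms'
  end.

(* Main.v *)
Require Import Defs.
From Stdlib Require Import Arith List Lia Classical FunctionalExtensionality.
Import ListNotations.

Definition sub (m : move) (j : nat) : nat :=
  match m with
  | Comb i => if Nat.eqb i 1 then (if Nat.eqb j 1 then 2 else 0)
              else (if Nat.eqb j (i-1) then 1 else 0) + (if Nat.eqb j i then 1 else 0)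
  | Split i => if Nat.eqb j i then 2 else 0
  end.
Definition add (m : move) (j : nat) : nat :=
  match m with
  | Comb i => if Nat.eqb i 1 then (if Nat.eqb j 2 then 1 else 0)
              else (if Nat.eqb j (i+1) then 1 else 0)
  | Split i => if Nat.eqb i 2 then (if Nat.eqb j 1 then 1 else 0) + (if Nat.eqb j 3 then 1 else 0)
               else (if Nat.eqb j (i-2) then 1 else 0) + (if Nat.eqb j (i+1) then 1 else 0)
  end.

Ltac eqbs := repeat (match goal with
  | |- context [Nat.eqb ?a ?b] =>
     first [ rewrite (proj2 (Nat.eqb_neq a b)) by lia
           | rewrite (proj2 (Nat.eqb_eq a b)) by lia
           | destruct (Nat.eqb_spec a b) ]
  end; cbv beta iota); try subst.

Lemma next_spec m X j : legal m X -> next m X j + sub m j = X j + add m j.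
Proof.
  destruct m as [i|i]; simpl; intros H; unfold addc, subc, sub, add; eqbs; lia.
Qed.

Lemma val_next m X j : legal m X -> next m X j = X j + add m j - sub m j.
Proof. intros H; pose proof (next_spec m X j H); lia. Qed.

Lemma comm m1 m2 X : legal m1 X -> legal m2 (next m1 X) -> legal m2 X ->
  legal m1 (next m2 X) -> next m2 (next m1 X) = next m1 (next m2 X).
Proof.
  intros H1 H2 H3 H4; apply functional_extensionality; intro j.
  pose proof (next_spec _ _ j H1); pose proof (next_spec _ _ j H2);
  pose proof (next_spec _ _ j H3); pose proof (next_spec _ _ j H4); lia.
Qed.

Lemma gp_cons X m Q : game_path X (m :: Q) <-> legal m X /\ game_path (next m X) Q.
Proof. unfold game_path; simpl; tauto. Qed.

Lemma gp_nil X : game_path X [] -> forall m, ~ legal m X.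
Proof. unfold game_path; simpl; tauto. Qed.

Ltac isnum t := lazymatch t with O => idtac | S ?x => isnum x end.
Ltac numnorm := repeat match goal with
  | |- context [?a - ?b] => isnum a; isnum b; let v := eval cbv in (a - b) in change (a - b) with v
  | |- context [?a + ?b] => isnum a; isnum b; let v := eval cbv in (a + b) in change (a + b) with v
  end.
Ltac xlink := repeat match goal with
  | |- context [?f ?a] => lazymatch type of f with state =>
      match goal with
      | H : context [f ?b] |- _ =>
          tryif constr_eq a b then fail else
          lazymatch goal with
          | _ : a = b -> f a = f b |- _ => fail
          | _ => assert (a = b -> f a = f b) by (intros ->; reflexivity)
          end
      | |- context [f ?b] =>
          tryif constr_eq a b then fail else
          lazymatch goal with
          | _ : a = b -> f a = f b |- _ => fail
          | _ : b = a -> f b = f a |- _ => fail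
          | _ => assert (a = b -> f a = f b) by (intros ->; reflexivity)
          end
      end end
  end.
Ltac vn := repeat match goal with
  | H : legal ?m ?Y |- context [next ?m ?Y ?j] => rewrite (val_next m Y j H)
  end; unfold add, sub; eqbs; numnorm; xlink.

Lemma legC1_intro Y : 2 <= Y 1 -> legal (Comb 1) Y.
Proof. simpl; lia. Qed.
Lemma legC_intro j Y : 2 <= j -> 1 <= Y (j-1) -> 1 <= Y j -> legal (Comb j) Y.
Proof. simpl; lia. Qed.
Lemma legS_intro a Y : 2 <= a -> 2 <= Y a -> legal (Split a) Y.
Proof. simpl; lia. Qed.
Ltac vn0 := repeat match goal with
  | H : legal ?m ?Y |- context [next ?m ?Y ?j] => rewrite (val_next m Y j H)
  end; unfold add, sub; eqbs; numnorm.
Ltac fin0 := match goal with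
  | |- legal (Comb 1) _ => apply legC1_intro
  | |- legal (Comb ?j) _ => apply legC_intro; [lia| |]
  | |- legal (Split _) _ => apply legS_intro; [lia|]
  end; vn0; lia.
Ltac fin := match goal with
  | |- legal (Comb 1) _ => apply legC1_intro
  | |- legal (Comb ?j) _ => apply legC_intro; [lia| |]
  | |- legal (Split _) _ => apply legS_intro; [lia|]
  end; vn; lia.

Lemma legC j X : 2 <= j -> legal (Comb j) X -> 1 <= X (j-1) /\ 1 <= X j.
Proof. simpl; lia. Qed.

Lemma lemA : forall P X s, split_class s -> legal s X -> game_path X P ->
  exists Q, game_path X (s :: Q) /\ length P <= S (length Q).
Proof.
  induction P as [|m1 P IH]; intros X s Hs Hl HP.
  - exfalso; exact (gp_nil X HP s Hl).
  - apply gp_cons in HP as [Hm1 HP'].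
    destruct (classic (legal s (next m1 X) /\ legal m1 (next s X))) as [[Ha Hb]|Hn].
    + destruct (IH _ s Hs Ha HP') as [Q1 [HQ1 Hlen]].
      exists (m1 :: Q1); split; [|simpl; lia].
      apply gp_cons; split; [exact Hl|]. apply gp_cons; split; [exact Hb|].
      rewrite (comm s m1 X Hl Hb Hm1 Ha). apply gp_cons in HQ1; tauto.
    + clear IH. destruct s as [i|a]; simpl in Hs.
      * subst i. assert (HX1 : 2 <= X 1) by (simpl in Hl; lia). destruct m1 as [j|b].
        -- destruct (classic (j = 1)) as [->|Hj1]; [exists P; split; [apply gp_cons; auto|simpl; lia]|].
           assert (Hj2 : 2 <= j) by (simpl in Hm1; lia).
           destruct (legC j X Hj2 Hm1) as [Hx1 Hx2].
           destruct (classic (j = 2 /\ X 1 = 2)) as [[-> HX]|Hc].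
           ++ exists (Split 2 :: P); split; [|simpl; lia].
              assert (L2 : legal (Split 2) (next (Comb 1) X)) by fin.
              apply gp_cons; split; [exact Hl|]. apply gp_cons; split; [exact L2|].
              replace (next (Split 2) (next (Comb 1) X)) with (next (Comb 2) X); [exact HP'|].
              apply functional_extensionality; intro j. vn; lia.
           ++ exfalso; apply Hn; split; fin.
        -- assert (Hb : 2 <= b /\ 2 <= X b) by (simpl in Hm1; lia).
           exfalso; apply Hn; split; fin.
      * assert (Ha : 2 <= a /\ 2 <= X a) by (simpl in Hl; lia). destruct m1 as [j|b].
        -- destruct (classic (j = 1)) as [->|Hj1].
           { assert (2 <= X 1) by (simpl in Hm1; lia). exfalso; apply Hn; split; fin. }
           assert (Hj2 : 2 <= j) by (simpl in Hm1; lia).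
           destruct (legC j X Hj2 Hm1) as [Hx1 Hx2].
           destruct (classic (X a = 2 /\ (a = j - 1 \/ a = j))) as [[HX Haj0]|Hc].
           2:{ exfalso; apply Hn.
               destruct (classic (X a = 2)) as [HX|HX].
               - assert (a <> j - 1 /\ a <> j) by tauto. split; fin.
               - split; fin. }
           destruct (classic (a = j - 1)) as [Haj|Haj].
           ++ destruct (classic (a = 2)) as [Ha2|Ha2].
              ** rewrite Ha2 in *. assert (j = 3) by lia; subst j.
                 exists (Split 3 :: Comb 1 :: P); split; [|simpl; lia].
                 assert (L2 : legal (Split 3) (next (Split 2) X)) by fin.
                 assert (L3 : legal (Comb 1) (next (Split 3) (next (Split 2) X))) by fin.
                 apply gp_cons; split; [exact Hl|]. apply gp_cons; split; [exact L2|].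
                 apply gp_cons; split; [exact L3|].
                 replace (next (Comb 1) (next (Split 3) (next (Split 2) X))) with (next (Comb 3) X); [exact HP'|].
                 apply functional_extensionality; intro j. vn; lia.
              ** assert (Ha3 : 3 <= a) by lia. assert (j = a + 1) by lia; subst j.
                 exists (Split (a+1) :: Comb (a-1) :: P); split; [|simpl; lia].
                 assert (L2 : legal (Split (a+1)) (next (Split a) X)) by fin.
                 assert (L3 : legal (Comb (a-1)) (next (Split (a+1)) (next (Split a) X))) by fin.
                 apply gp_cons; split; [exact Hl|]. apply gp_cons; split; [exact L2|].
                 apply gp_cons; split; [exact L3|].
                 replace (next (Comb (a-1)) (next (Split (a+1)) (next (Split a) X))) with (next (Comb (a+1)) X); [exact HP'|].
                 apply functional_extensionality; intro j. vn; lia.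
           ++ assert (a = j) by lia; subst j.
              destruct (classic (a = 2)) as [Ha2|Ha2].
              ** subst a.
                 exists (Comb 1 :: P); split; [|simpl; lia].
                 assert (L2 : legal (Comb 1) (next (Split 2) X)) by fin.
                 apply gp_cons; split; [exact Hl|]. apply gp_cons; split; [exact L2|].
                 replace (next (Comb 1) (next (Split 2) X)) with (next (Comb 2) X); [exact HP'|].
                 apply functional_extensionality; intro j. vn; lia.
              ** assert (Ha3 : 3 <= a) by lia.
                 exists (Comb (a-1) :: P); split; [|simpl; lia].
                 assert (L2 : legal (Comb (a-1)) (next (Split a) X)) by fin.
                 apply gp_cons; split; [exact Hl|]. apply gp_cons; split; [exact L2|].
                 replace (next (Comb (a-1)) (next (Split a) X)) with (next (Comb a) X); [exact HP'|].
                 apply functional_extensionality; intro j. vn; lia.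
        -- assert (Hb : 2 <= b /\ 2 <= X b) by (simpl in Hm1; lia).
           destruct (classic (b = a)) as [->|Hba]; [exists P; split; [apply gp_cons; auto|simpl; lia]|].
           exfalso; apply Hn; split; fin.
Qed.

Definition Inv (X : state) (i : nat) : Prop :=
  2 <= i /\ X (i-1) = 1 /\ X i = 1 /\
  (forall k, 1 <= k <= i -> X k <= 1) /\
  (forall k, 2 <= k < i -> X (k-1) = 0 \/ X k = 0) /\
  (forall k, 1 <= k -> X k <= 2) /\
  (forall k, 1 <= k -> X k = 2 -> X (k-1) = 0 /\ X (k-2) = 0) /\
  (forall k k', 1 <= k -> 1 <= k' -> X k = 2 -> X k' = 2 -> k = k').

Definition PB (X : state) (n : nat) : Prop := forall Q, game_path X Q -> length Q <= n.

Lemma PB_next X n m : PB X (S n) -> legal m X -> PB (next m X) n.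
Proof.
  intros H Hl Q HQ. assert (H0 : game_path X (m :: Q)) by (apply gp_cons; auto).
  specialize (H _ H0). simpl in H. lia.
Qed.

Lemma Opt : forall n X i P, PB X n -> Inv X i -> game_path X P ->
  exists Q, game_path X (Comb i :: Q) /\ length P <= S (length Q).
Proof.
  induction n as [|n IH]; intros X i P HB HI HP.
  - destruct HI as (Hi2 & Hx1 & Hx2 & _).
    assert (HCi : legal (Comb i) X) by (apply legC_intro; lia).
    destruct P as [|m P]; [exfalso; exact (gp_nil X HP _ HCi)|].
    specialize (HB _ HP); simpl in HB; lia.
  - destruct HI as (Hi2 & Hx1 & Hx2 & Hlow & Hpair & Hle2 & Hnb & Huq).
    assert (HCi : legal (Comb i) X) by (apply legC_intro; lia).
    destruct (classic (exists k, 1 <= k /\ X k = 2)) as [[k [Hk1 Hk2]]|Hno].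
    + assert (Hk : i + 3 <= k).
      { destruct (Nat.le_gt_cases k i) as [Hki|Hki]; [specialize (Hlow k); lia|].
        destruct (Hnb k Hk1 Hk2) as [H1 H2].
        destruct (classic (k = i+1)) as [Hq|Hq];
          [subst k; replace (i+1-1) with i in H1 by lia; lia|].
        destruct (classic (k = i+2)) as [Hq'|Hq'];
          [subst k; replace (i+2-2) with i in H2 by lia; lia|]. lia. }
      assert (HSk : legal (Split k) X) by (apply legS_intro; lia).
      destruct (lemA P X (Split k) I HSk HP) as [Q1 [HQ1 Hl1]].
      apply gp_cons in HQ1 as [_ HQ1].
      destruct (Hnb k Hk1 Hk2) as [Hkm1 Hkm2].
      assert (Hkp : X (k+1) <= 1).
      { pose proof (Hle2 (k+1) ltac:(lia)). pose proof (Huq k (k+1)). lia. }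
      assert (Htwo : forall m, 1 <= m -> next (Split k) X m = 2 -> m = k+1).
      { intros m Hm H2. destruct (classic (m = k+1)) as [|Hne]; [auto|exfalso].
        pose proof (Huq k m ltac:(lia) Hm Hk2) as Hu. pose proof (Hle2 m Hm).
        revert H2; vn0; lia. }
      assert (HI' : Inv (next (Split k) X) i).
      { unfold Inv. split; [lia|]. split; [vn0; lia|]. split; [vn0; lia|].
        split; [intros m Hm; pose proof (Hlow m Hm); vn0; lia|].
        split; [intros m Hm; pose proof (Hpair m Hm); vn0; lia|].
        split; [intros m Hm; pose proof (Hle2 m Hm); vn0; lia|].
        split.
        - intros m Hm H2. pose proof (Htwo m Hm H2); subst m. split; vn; lia.
        - intros m m' Hm Hm' H2 H2'. pose proof (Htwo m Hm H2); pose proof (Htwo m' Hm' H2'); lia. }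
      destruct (IH _ i Q1 (PB_next _ _ _ HB HSk) HI' HQ1) as [Q2 [HQ2 Hl2]].
      exists (Split k :: Q2). split; [|simpl; lia].
      apply gp_cons in HQ2 as [HCi' HQ2].
      assert (L1 : legal (Split k) (next (Comb i) X)) by fin0.
      apply gp_cons; split; [exact HCi|]. apply gp_cons; split; [exact L1|].
      rewrite (comm (Comb i) (Split k) X HCi L1 HSk HCi'). exact HQ2.
    + assert (Hle1 : forall k, 1 <= k -> X k <= 1).
      { intros k Hk; specialize (Hle2 k Hk).
        assert (X k <> 2) by (intro; apply Hno; eauto). lia. }
      destruct P as [|m1 P]; [exfalso; exact (gp_nil X HP _ HCi)|].
      apply gp_cons in HP as [Hm1 HP'].
      destruct m1 as [j|b].
      * destruct (classic (j = 1)) as [->|Hj1]; [simpl in Hm1; specialize (Hle1 1); lia|].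
        assert (Hj2 : 2 <= j) by (simpl in Hm1; lia).
        destruct (legC j X Hj2 Hm1) as [Hy1 Hy2].
        destruct (lt_eq_lt_dec j i) as [[Hlt|Heq]|Hgt].
        -- specialize (Hpair j); lia.
        -- subst j. exists P. split; [apply gp_cons; auto | simpl; lia].
        -- destruct (classic (j = i+1)) as [->|Hj].
           ++ exists (Split (i+1) :: P). split; [|simpl; lia].
              assert (L1 : legal (Split (i+1)) (next (Comb i) X)) by fin0.
              apply gp_cons; split; [exact HCi|]. apply gp_cons; split; [exact L1|].
              replace (next (Split (i+1)) (next (Comb i) X)) with (next (Comb (i+1)) X); [exact HP'|].
              apply functional_extensionality; intro j. vn0; lia.
           ++ assert (Hj3 : i + 2 <= j) by lia.
              assert (Htwo : forall m, 1 <= m -> next (Comb j) X m = 2 -> m = j+1).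
              { intros m Hm H2. destruct (classic (m = j+1)) as [|Hne]; [auto|exfalso].
                pose proof (Hle1 m Hm). revert H2; vn0; lia. }
              assert (HI' : Inv (next (Comb j) X) i).
              { unfold Inv. split; [lia|]. split; [vn0; lia|]. split; [vn0; lia|].
                split; [intros m Hm; pose proof (Hlow m Hm); vn0; lia|].
                split; [intros m Hm; pose proof (Hpair m Hm); vn0; lia|].
                split; [intros m Hm; pose proof (Hle1 m Hm); vn0; lia|].
                split.
                - intros m Hm H2. pose proof (Htwo m Hm H2); subst m.
                  pose proof (Hle1 j ltac:(lia)); pose proof (Hle1 (j-1) ltac:(lia)).
                  split; vn; lia.
                - intros m m' Hm Hm' H2 H2'. pose proof (Htwo m Hm H2); pose proof (Htwo m' Hm' H2'); lia. }
              destruct (IH _ i P (PB_next _ _ _ HB Hm1) HI' HP') as [Q2 [HQ2 Hl2]].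
              exists (Comb j :: Q2); split; [|simpl; lia].
              apply gp_cons in HQ2 as [HCi' HQ2].
              assert (L1 : legal (Comb j) (next (Comb i) X)) by fin0.
              apply gp_cons; split; [exact HCi|]. apply gp_cons; split; [exact L1|].
              rewrite (comm (Comb i) (Comb j) X HCi L1 Hm1 HCi'). exact HQ2.
      * exfalso. assert (2 <= b /\ 2 <= X b) by (simpl in Hm1; lia). specialize (Hle1 b); lia.
Qed.

Lemma min_ex (Pr : nat -> Prop) n : Pr n -> exists m, Pr m /\ forall k, Pr k -> m <= k.
Proof.
  induction n as [n IH] using lt_wf_ind. intros H.
  destruct (classic (exists k, k < n /\ Pr k)) as [[k [Hk Hp]]|Hn].
  - exact (IH k Hk Hp).
  - exists n; split; [exact H|]. intros k Hk. destruct (le_lt_dec n k); [auto|].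
    exfalso; apply Hn; eauto.
Qed.

Lemma SFex : forall L X P, PB X L -> game_path X P -> length P = L ->
  exists Q, game_path X Q /\ follows_sf X Q /\ length Q = L.
Proof.
  induction L as [|L IHL]; intros X P HB HP HL.
  - destruct P; [|discriminate]. exists []; simpl; auto.
  - destruct P as [|m P]; [discriminate|]. simpl in HL. injection HL as HL.
    destruct (classic (exists s, split_class s /\ legal s X)) as [[s [Hs Hsl]]|Hns].
    + destruct (lemA (m::P) X s Hs Hsl HP) as [Q1 [HQ1 Hl1]].
      pose proof (HB _ HQ1) as Hb1; simpl in Hb1, Hl1.
      apply gp_cons in HQ1 as [_ HQ1].
      destruct (IHL (next s X) Q1 (PB_next _ _ _ HB Hsl) HQ1 ltac:(lia)) as [Q2 [H1 [H2 H3]]].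
      exists (s::Q2); split; [apply gp_cons; auto|]. split; [|simpl; lia].
      simpl; split; [|exact H2]. split; [intros _; exact Hs| intros Hc; exfalso; apply Hc; eauto].
    + pose proof HP as HP0. apply gp_cons in HP0 as [Hm HP'].
      destruct m as [j|b]; [|exfalso; apply Hns; exists (Split b); simpl; auto].
      destruct (classic (j = 1)) as [->|Hj1]; [exfalso; apply Hns; exists (Comb 1); simpl; auto|].
      assert (Hj2 : 2 <= j) by (simpl in Hm; lia).
      destruct (min_ex (fun i => 2 <= i /\ legal (Comb i) X) j (conj Hj2 Hm)) as [i [[Hi2 HCi] Hmin]].
      assert (Hle1 : forall k, 1 <= k -> X k <= 1).
      { intros k Hk; destruct (le_lt_dec (X k) 1); auto; exfalso; apply Hns.
        destruct (classic (k = 1)) as [->|Hk1];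
          [exists (Comb 1); simpl; split; auto; lia | exists (Split k); simpl; split; auto; lia]. }
      destruct (legC i X Hi2 HCi) as [Hx1 Hx2].
      assert (HI : Inv X i).
      { unfold Inv. split; [lia|].
        split; [pose proof (Hle1 (i-1) ltac:(lia)); lia|].
        split; [pose proof (Hle1 i ltac:(lia)); lia|].
        split; [intros k Hk; apply Hle1; lia|].
        split; [intros k Hk; destruct (classic (1 <= X (k-1) /\ 1 <= X k)) as [[Ha Hb]|Hc];
                [exfalso; pose proof (Hmin k (conj (proj1 Hk) (legC_intro k X (proj1 Hk) Ha Hb))); lia | lia]|].
        split; [intros k Hk; pose proof (Hle1 k Hk); lia|].
        split; [intros k Hk H2; pose proof (Hle1 k Hk); lia|].
        intros k k' Hk Hk' H2; pose proof (Hle1 k Hk); lia. }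
      destruct (Opt (S L) X i (Comb j :: P) HB HI HP) as [Q1 [HQ1 Hl1]].
      pose proof (HB _ HQ1) as Hb1; simpl in Hb1, Hl1.
      apply gp_cons in HQ1 as [_ HQ1].
      destruct (IHL (next (Comb i) X) Q1 (PB_next _ _ _ HB HCi) HQ1 ltac:(lia)) as [Q2 [H1 [H2 H3]]].
      exists (Comb i :: Q2); split; [apply gp_cons; auto|]. split; [|simpl; lia].
      simpl; split; [|exact H2]. split.
      * intros Hc; exfalso; apply Hns; exact Hc.
      * intros _; exists i; split; [auto|]. split; [lia|]. intros j' Hj' Hl'; apply Hmin; auto.
Qed.

Theorem lemma2p3 (G : state) (P : list move) :
  is_state G ->
  game_path G P ->
  ~ follows_sf G P ->
  (exists Q, game_path G Q /\ length P < length Q) \/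
  (exists Q, game_path G Q /\ follows_sf G Q /\ length Q = length P).
Proof.
  intros _ HP _.
  destruct (classic (exists Q, game_path G Q /\ length P < length Q)) as [H|H]; [left; exact H|right].
  assert (HB : PB G (length P)).
  { intros Q HQ. destruct (le_lt_dec (length Q) (length P)); [auto|]. exfalso; apply H; eauto. }
  exact (SFex (length P) G P HB HP eq_refl).
Qed.
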